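(* Let $\rho>0$, $\xi\in\mathbb{R}$, and $H=\frac{1}{2(1+\rho u^2)}\big(u^2(P_u^2+P_y^2)+\xi\big)$ on $(u,y)\in(0,\infty)\times\mathbb{R}$. On the level set $H=E$, $P_y=L>0$ with $2E=\xi$, the projections to the $(u,y)$-plane of the trajectories of the Hamiltonian flow degenerate into the lines $$u=\sqrt{\frac{2\rho E-L^2}{L^2}}\,|y-y_0|,\qquad u\in(0,+\infty),$$ for some $y_0\in\mathbb{R}$. *)

(* Defs.v *)
From Stdlib Require Import Reals.
From Coquelicot Require Import Coquelicot.
Open Scope R_scope.

Definition Ham (rho xi : R) (u y pu py : R) : R :=
  (u ^ 2 * (pu ^ 2 + py ^ 2) + xi) / (2 * (1 + rho * u ^ 2)).

Definition is_hamiltonian_trajectory (H : R -> R -> R -> R -> R)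
    (a b : Rbar) (u y pu py : R -> R) : Prop :=
  forall t : R, Rbar_lt a t -> Rbar_lt t b ->
    is_derive u t (Derive (fun q => H (u t) (y t) q (py t)) (pu t)) /\
    is_derive y t (Derive (fun q => H (u t) (y t) (pu t) q) (py t)) /\
    is_derive pu t (- Derive (fun q => H q (y t) (pu t) (py t)) (u t)) /\
    is_derive py t (- Derive (fun q => H (u t) q (pu t) (py t)) (y t)).

(* Main.v *)
Require Import Defs.
From Stdlib Require Import Reals Lra Psatz Classical.
From Coquelicot Require Import Coquelicot.
Open Scope R_scope.

Lemma D_pu rho xi x yv p l : 0 < rho ->
  Derive (fun q => Ham rho xi x yv q l) p = x^2*p/(1+rho*x^2).
Proof.
  intro Hr. apply is_derive_unique. unfold Ham.
  assert (0 < 1 + rho * x^2) by nra.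
  auto_derive. lra. field. lra.
Qed.

Lemma D_py rho xi x yv p l : 0 < rho ->
  Derive (fun q => Ham rho xi x yv p q) l = x^2*l/(1+rho*x^2).
Proof.
  intro Hr. apply is_derive_unique. unfold Ham.
  assert (0 < 1 + rho * x^2) by nra.
  auto_derive. lra. field. lra.
Qed.

Lemma D_u rho xi x yv p l : 0 < rho -> p^2 + l^2 = rho * xi ->
  Derive (fun q => Ham rho xi q yv p l) x = 0.
Proof.
  intros Hr Hk. apply is_derive_unique. unfold Ham. rewrite Hk.
  auto_derive.
  - intros; nra.
  - field. nra.
Qed.

Lemma D_y rho xi x yv p l :
  Derive (fun q => Ham rho xi x q p l) yv = 0.
Proof.
  apply is_derive_unique. unfold Ham. auto_derive. auto. ring.
Qed.

Lemma const_on (a b : Rbar) (g : R -> R) :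
  (forall t : R, Rbar_lt a t -> Rbar_lt t b -> is_derive g t 0) ->
  forall t1 t2 : R, Rbar_lt a t1 -> Rbar_lt t1 b -> Rbar_lt a t2 -> Rbar_lt t2 b ->
  g t1 = g t2.
Proof.
  intros Hd t1 t2 h1 h2 h3 h4.
  assert (Hin : forall x, Rmin t1 t2 <= x <= Rmax t1 t2 -> Rbar_lt a x /\ Rbar_lt x b).
  { intros x [hx1 hx2]. split.
    - apply Rbar_lt_le_trans with (Finite (Rmin t1 t2)); [|exact hx1].
      unfold Rmin; destruct Rle_dec; assumption.
    - apply Rbar_le_lt_trans with (Finite (Rmax t1 t2)); [exact hx2|].
      unfold Rmax; destruct Rle_dec; assumption. }
  destruct (MVT_gen g t1 t2 (fun _ => 0)) as [c [_ Hc]].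
  - intros x hx. apply Hd; apply Hin; lra.
  - intros x hx. apply continuity_pt_filterlim. apply (ex_derive_continuous (K:=R_AbsRing) (V:=R_NormedModule)).
    eexists. apply Hd; apply Hin; lra.
  - lra.
Qed.

Theorem proposition17 (rho xi E L : R) (a b : Rbar) (u y pu py : R -> R) :
  0 < rho -> 0 < L -> 2 * E = xi -> L ^ 2 < 2 * rho * E ->
  Rbar_lt a b ->
  is_hamiltonian_trajectory (Ham rho xi) a b u y pu py ->
  (forall t : R, Rbar_lt a t -> Rbar_lt t b ->
     0 < u t /\ Ham rho xi (u t) (y t) (pu t) (py t) = E /\ py t = L) ->
  exists y0 : R, forall t : R, Rbar_lt a t -> Rbar_lt t b ->
    u t = sqrt ((2 * rho * E - L ^ 2) / L ^ 2) * Rabs (y t - y0).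
Proof.
  intros Hr HL HE HLE Hab Htr Hlev.
  assert (Hp : forall t : R, Rbar_lt a t -> Rbar_lt t b ->
            pu t ^ 2 + py t ^ 2 = rho * xi /\ py t = L /\ 0 < u t).
  { intros t h1 h2. destruct (Hlev t h1 h2) as [hu [hH hL]].
    unfold Ham in hH. split; [|tauto].
    assert (0 < 1 + rho * u t ^ 2) by nra.
    apply Rmult_eq_compat_r with (r := 2 * (1 + rho * u t ^ 2)) in hH.
    unfold Rdiv in hH. rewrite Rmult_assoc, Rinv_l in hH by lra.
    assert (u t ^ 2 * (pu t ^ 2 + py t ^ 2 - rho * xi) = 0) by nra.
    apply Rmult_integral in H0. destruct H0; [nra|lra]. }
  assert (Hpu' : forall t : R, Rbar_lt a t -> Rbar_lt t b -> is_derive pu t 0).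
  { intros t h1 h2. destruct (Htr t h1 h2) as [_ [_ [h _]]].
    rewrite D_u in h by (apply Hr || apply (Hp t h1 h2)).
    replace 0 with (-0) by ring. exact h. }
  set (f := fun t => L * u t - pu t * y t).
  assert (Hf' : forall t : R, Rbar_lt a t -> Rbar_lt t b -> is_derive f t 0).
  { intros t h1 h2. destruct (Htr t h1 h2) as [du [dy _]].
    destruct (Hp t h1 h2) as [_ [hL _]].
    rewrite D_pu in du by exact Hr. rewrite D_py in dy by exact Hr.
    rewrite hL in dy.
    unfold f. apply (is_derive_ext (fun t => L * u t - pu t * y t)); [reflexivity|].
    evar (d : R). replace 0 with d.
    - apply @is_derive_minus. apply @is_derive_scal. exact du.
      apply @is_derive_mult. exact (Hpu' t h1 h2). exact dy.
      intros; simpl; apply Rmult_comm.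
    - unfold d. simpl. unfold scal, mult; simpl. unfold mult; simpl.
      assert (0 < 1 + rho * u t ^ 2) by (destruct (Hp t h1 h2) as [_ [_ ?]]; nra).
      unfold minus, plus, opp; simpl. field. lra. }
  destruct (classic (exists t0 : R, Rbar_lt a t0 /\ Rbar_lt t0 b)) as [[t0 [h01 h02]]|Hno].
  2:{ exists 0. intros t h1 h2. exfalso. apply Hno. exists t; auto. }
  set (p0 := pu t0). set (C := f t0).
  destruct (Hp t0 h01 h02) as [hp0 [hL0 _]].
  fold p0 in hp0. rewrite hL0 in hp0.
  assert (Hp0 : p0 ^ 2 = 2 * rho * E - L ^ 2) by nra.
  assert (p0n : p0 <> 0) by (intro e; rewrite e in Hp0; nra).
  exists (- C / p0). intros t h1 h2.
  assert (ep : pu t = p0) by (apply (const_on a b pu Hpu'); auto).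
  assert (ef : f t = C) by (apply (const_on a b f Hf'); auto).
  unfold f in ef. rewrite ep in ef.
  destruct (Hp t h1 h2) as [_ [_ hu]].
  assert (eu0 : u t = (C + p0 * y t) / L) by (rewrite <- ef; field; lra).
  assert (eu : u t = (p0 / L) * (y t - - C / p0)) by (rewrite eu0; field; split; lra).
  rewrite <- Hp0.
  replace ((p0 ^ 2) / L ^ 2) with ((p0 / L) ^ 2) by (field; lra).
  replace ((p0/L)^2) with (Rsqr (p0/L)) by (unfold Rsqr; ring).
  rewrite sqrt_Rsqr_abs, <- Rabs_mult, <- eu. symmetry; apply Rabs_pos_eq; lra.
Qed.
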